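(* Let $\mathcal{A}$ be a finite set of positive integers, let $w \leqslant z$ be real numbers, let $0 < m_0 \leqslant 1$, and let $m_1, m_2$ be real numbers with $(m_1, m_2) \in \mathcal{U}$. Then $$ S(\mathcal{A}, z) \geqslant S(\mathcal{A}, w) - \frac{m_0m_1 + m_0m_2 + m_1m_2 - m_0 - m_1 - m_2 + 1}{m_0m_1m_2} \sum_{w \leqslant p_1 < z} S(\mathcal{A}_{p_1}, w) + \frac{2(m_0 + m_1 + m_2 - 3)}{m_0m_1m_2} \sum_{w \leqslant p_2 < p_1 < z} S(\mathcal{A}_{p_1p_2}, w) - \frac{6}{m_0m_1m_2} \sum_{w \leqslant p_3 < p_2 < p_1 < z} S(\mathcal{A}_{p_1p_2p_3}, w). $$
   Context: Throughout, $p, p_1, p_2, \dots$ denote prime numbers. For a finite set $\mathcal{A}$ of positive integers and a positive integer $d$, $\mathcal{A}_d = \{a : ad \in \mathcal{A}\}$. For real $z$, $S(\mathcal{A}, z)$ denotes the number of $a \in \mathcal{A}$ having no prime factor less than $z$. Let $T = (0,1] \cup [2,3] \cup [4,5] \cup \cdots$, i.e. $T$ is the union of $(0,1]$ and the intervals $[k-1,k]$ over all odd integers $k \geqslant 3$, and let $\mathcal{U} = \{(x_1, x_2) : x_1, x_2 \in T,\ |x_1 - x_2| \leqslant 1\}$. *)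

(* Defs.v *)
From mathcomp Require Import all_boot all_order all_algebra.
From mathcomp Require Import reals.
Set Implicit Arguments. Unset Strict Implicit. Unset Printing Implicit Defensive.
Import Order.TTheory GRing.Theory Num.Theory.
Local Open Scope ring_scope.

Section Defs.
Variable R : realType.

(* A_d = {a : a d in A}, for A a finite set of positive integers given as a
   duplicate-free sequence *)
Definition sieve_sub (A : seq nat) (d : nat) : seq nat :=
  [seq (a %/ d)%N | a <- A & (d %| a)%N].

Definition rough (z : R) (a : nat) : bool :=
  all (fun p => z <= p%:R) (primes a).

Definition S (A : seq nat) (z : R) : nat := count (rough z) A.

(* the primes p with w <= p < z (all such p are <= truncn |z|) *)
Definition primes_between (w z : R) : seq nat :=
  [seq p <- iota 0 (Num.truncn `|z|).+1 | prime p && (w <= p%:R) && (p%:R < z)].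

(* T = (0,1] U [2,3] U [4,5] U ... *)
Definition inT (x : R) : Prop :=
  (0 < x <= 1) \/ (exists k : nat, odd k /\ (3 <= k)%N /\ (k.-1)%:R <= x <= k%:R).

Definition inU (x1 x2 : R) : Prop := inT x1 /\ inT x2 /\ `|x1 - x2| <= 1.

End Defs.

(* Main.v *)
Require Import Defs.
From mathcomp Require Import all_boot all_order all_algebra.
From mathcomp Require Import reals.
From mathcomp Require Import lra zify ring.
Import Order.TTheory GRing.Theory Num.Theory.

Lemma count_sumE (T : Type) (a : pred T) (s : seq T) :
  count a s = (\sum_(x <- s) (a x : nat))%N.
Proof. by elim: s => [|x s IH]; rewrite ?big_nil ?big_cons //= IH. Qed.

Section Comb.
Variable Q : pred nat.

Lemma lt0_sum x L (G : nat -> nat) : all (ltn x) L ->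
  \sum_(y <- x :: L | y < x) G y = 0.
Proof.
move=> /allP H; rewrite big_cons ltnn big_seq_cond big1 // => y /andP[/H Hy].
by rewrite ltnNge ltnW.
Qed.

Lemma ltS_sum x L x' (G : nat -> nat) : x < x' ->
  \sum_(y <- x :: L | y < x') G y = G x + \sum_(y <- L | y < x') G y.
Proof. by move=> h; rewrite big_cons h. Qed.

Lemma comb2 L : sorted ltn L ->
  \sum_(x <- L) \sum_(y <- L | y < x) (Q x && Q y : nat) = 'C(count Q L, 2).
Proof.
elim: L => [|x L IH] /=; first by rewrite big_nil.
move=> Hp; have Hs : sorted ltn L := path_sorted Hp.
have Ha : all (ltn x) L := order_path_min ltn_trans Hp.
rewrite big_cons lt0_sum // add0n.
have -> : \sum_(x' <- L) \sum_(y <- x :: L | y < x') (Q x' && Q y : nat) =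
   \sum_(x' <- L) ((Q x' && Q x : nat) + \sum_(y <- L | y < x') (Q x' && Q y : nat)).
  by apply: eq_big_seq => x' /(allP Ha) h; rewrite ltS_sum.
rewrite big_split /= IH //.
case: (Q x) => /=.
  rewrite add1n binS bin1 addnC; congr (_ + _).
  by rewrite count_sumE; apply: eq_bigr => i _; rewrite andbT.
by rewrite add0n big1 // => i _; rewrite andbF.
Qed.

Lemma comb3 L : sorted ltn L ->
  \sum_(x <- L) \sum_(y <- L | y < x) \sum_(u <- L | u < y) (Q x && Q y && Q u : nat)
   = 'C(count Q L, 3).
Proof.
elim: L => [|x L IH] /=; first by rewrite big_nil.
move=> Hp; have Hs : sorted ltn L := path_sorted Hp.
have Ha : all (ltn x) L := order_path_min ltn_trans Hp.
rewrite big_cons lt0_sum // add0n.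
have -> : \sum_(x' <- L) \sum_(y <- x :: L | y < x') \sum_(u <- x :: L | u < y) (Q x' && Q y && Q u : nat) =
   \sum_(x' <- L) (\sum_(y <- L | y < x') (Q x' && Q y && Q x : nat) +
      \sum_(y <- L | y < x') \sum_(u <- L | u < y) (Q x' && Q y && Q u : nat)).
  apply: eq_big_seq => x' /(allP Ha) h; rewrite ltS_sum // lt0_sum // add0n.
  rewrite -big_split /= big_seq_cond [in RHS]big_seq_cond.
  by apply: eq_bigr => y /andP[/(allP Ha) hy _]; rewrite ltS_sum.
rewrite big_split /= IH //.
case: (Q x) => /=.
  rewrite add1n binS addnC; congr (_ + _).
  rewrite -(@comb2 L Hs); apply: eq_bigr => i _; apply: eq_bigr => j _; by rewrite andbT.
by rewrite add0n big1 // => i _; rewrite big1 // => j _; rewrite andbF.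
Qed.
End Comb.

Local Open Scope ring_scope.
Section Sieve.
Variable R : realType.
Variables w z : R.

Lemma memP p : (p \in primes_between w z) = [&& prime p, w <= p%:R & p%:R < z].
Proof.
rewrite /primes_between mem_filter mem_iota add0n leq0n /= ltnS.
have [pz|] := boolP (p%:R < z); last by rewrite !andbF.
have pz' : p%:R <= `|z| by have := ler_norm z; lra.
by rewrite truncn_ge_nat ?normr_ge0 // pz' !andbT.
Qed.

Lemma sortedP : sorted ltn (primes_between w z).
Proof. exact: (sorted_filter ltn_trans _ (iota_ltn_sorted 0 _)). Qed.

Lemma rough_div d a : (0 < d)%N -> (d %| a)%N ->
  (forall p, prime p -> (p %| d)%N -> w <= p%:R) -> rough w (a %/ d) = rough w a.
Proof.
move=> d0 da Hd; rewrite /rough.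
have [->|a0] := posnP a; first by rewrite div0n.
have ad0 : (0 < a %/ d)%N by rewrite divn_gt0 // dvdn_leq.
apply/allP/allP => H p; rewrite mem_primes => /and3P[pp _ pa].
  move: pa; rewrite -(divnK da) Euclid_dvdM // => /orP[pa|pd]; last exact: Hd.
  by apply: H; rewrite mem_primes pp ad0.
apply: H; rewrite mem_primes pp a0 /=.
apply: dvdn_trans pa _; rewrite -{2}(divnK da); exact: dvdn_mulr.
Qed.

Lemma S_sub A d : (0 < d)%N ->
  (forall p, prime p -> (p %| d)%N -> w <= p%:R) ->
  S (sieve_sub A d) w = (\sum_(a <- A) ((d %| a) && rough w a : nat))%N.
Proof.
move=> d0 Hd; rewrite /S /sieve_sub count_map count_filter count_sumE.
apply: eq_bigr => a _ /=.
case da: (d %| a)%N; last by rewrite andbF.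
by rewrite andbT rough_div.
Qed.


Lemma dvd_prime_w p1 : p1 \in primes_between w z ->
  forall p, prime p -> (p %| p1)%N -> w <= p%:R.
Proof.
move=> H1 p pp; rewrite memP in H1; case/and3P: H1 => pr1 w1 _.
by rewrite dvdn_prime2 // => /eqP->.
Qed.

Lemma prime_P p : p \in primes_between w z -> prime p.
Proof. by rewrite memP => /and3P[]. Qed.
Arguments prime_P {p}.

Lemma dvd_pair a p1 p2 : prime p1 -> prime p2 -> (p2 < p1)%N ->
  (p1 * p2 %| a)%N = (p1 %| a)%N && (p2 %| a)%N.
Proof.
move=> h1 h2 lt; rewrite Gauss_dvd // prime_coprime // dvdn_prime2 //.
by rewrite gtn_eqF.
Qed.

Lemma dvd_triple a p1 p2 p3 : prime p1 -> prime p2 -> prime p3 -> (p2 < p1)%N ->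
  (p3 < p2)%N ->
  (p1 * p2 * p3 %| a)%N = (p1 %| a)%N && (p2 %| a)%N && (p3 %| a)%N.
Proof.
move=> h1 h2 h3 l1 l2; rewrite Gauss_dvd ?dvd_pair //.
rewrite coprimeMl !prime_coprime // !dvdn_prime2 // !gtn_eqF //.
exact: ltn_trans l2 l1.
Qed.

Definition kk a := count (fun p => (p %| a)%N) (primes_between w z).

Lemma E1 A : (\sum_(p1 <- primes_between w z) S (sieve_sub A p1) w =
   \sum_(a <- A) rough w a * kk a)%N.
Proof.
transitivity (\sum_(p1 <- primes_between w z) \sum_(a <- A) (rough w a && (p1 %| a)%N : nat))%N.
  apply: eq_big_seq => p1 H1.
  have p0 := prime_gt0 (prime_P H1).
  rewrite S_sub //; last exact: dvd_prime_w.
  by apply: eq_bigr => a _; rewrite andbC.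
rewrite exchange_big; apply: eq_bigr => a _.
case: (rough w a); first by rewrite mul1n /kk count_sumE.
by rewrite mul0n big1.
Qed.

Lemma E2 A : (\sum_(p1 <- primes_between w z) \sum_(p2 <- primes_between w z | (p2 < p1)%N)
     S (sieve_sub A (p1 * p2)) w =
   \sum_(a <- A) rough w a * 'C(kk a, 2))%N.
Proof.
transitivity (\sum_(p1 <- primes_between w z) \sum_(p2 <- primes_between w z | (p2 < p1)%N)
    \sum_(a <- A) (rough w a && ((p1 %| a)%N && (p2 %| a)%N)) : nat)%N.
  apply: eq_big_seq => p1 H1.
  rewrite big_seq_cond [in RHS]big_seq_cond; apply: eq_bigr => p2 /andP[H2 lt].
  have pp1 := prime_P H1; have pp2 := prime_P H2.
  rewrite S_sub; last first.
    by move=> p pp; rewrite Euclid_dvdM // => /orP[]; apply: dvd_prime_w.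
    by rewrite muln_gt0 !prime_gt0.
  by apply: eq_bigr => a _; rewrite andbC dvd_pair.
under eq_bigr => p1 _ do rewrite exchange_big.
rewrite exchange_big; apply: eq_bigr => a _.
case: (rough w a); first by rewrite mul1n /kk -(comb2 _ _ sortedP).
by rewrite mul0n big1 // => p1 _; rewrite big1.
Qed.

Lemma E3 A : (\sum_(p1 <- primes_between w z) \sum_(p2 <- primes_between w z | (p2 < p1)%N)
     \sum_(p3 <- primes_between w z | (p3 < p2)%N)
     S (sieve_sub A (p1 * p2 * p3)) w =
   \sum_(a <- A) rough w a * 'C(kk a, 3))%N.
Proof.
transitivity (\sum_(p1 <- primes_between w z) \sum_(p2 <- primes_between w z | (p2 < p1)%N)
    \sum_(p3 <- primes_between w z | (p3 < p2)%N)
    \sum_(a <- A) (rough w a && ((p1 %| a)%N && (p2 %| a)%N && (p3 %| a)%N)) : nat)%N.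
  apply: eq_big_seq => p1 H1.
  rewrite big_seq_cond [in RHS]big_seq_cond; apply: eq_bigr => p2 /andP[H2 lt].
  rewrite big_seq_cond [in RHS]big_seq_cond; apply: eq_bigr => p3 /andP[H3 lt3].
  have pp1 := prime_P H1; have pp2 := prime_P H2; have pp3 := prime_P H3.
  rewrite S_sub; last first.
    by move=> p pp; rewrite !Euclid_dvdM // => /orP[/orP[]|]; apply: dvd_prime_w.
    by rewrite !muln_gt0 !prime_gt0.
  by apply: eq_bigr => a _; rewrite andbC dvd_triple.
under eq_bigr => p1 _ do under eq_bigr => p2 _ do rewrite exchange_big.
under eq_bigr => p1 _ do rewrite exchange_big.
rewrite exchange_big; apply: eq_bigr => a _.
case: (rough w a); first by rewrite mul1n /kk -(comb3 _ _ sortedP).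
by rewrite mul0n big1 // => p1 _; rewrite big1 // => p2 _; rewrite big1.
Qed.

Lemma roughz a : rough w a -> kk a = 0%N -> rough z a.
Proof.
rewrite /rough => /allP H k0; apply/allP => p pa.
have wp := H p pa.
have [pz|//] := ltP (p%:R) z.
move: pa; rewrite mem_primes => /and3P[pp _ pa].
have pP : p \in primes_between w z by rewrite memP pp wp pz.
have : has (fun q => (q %| a)%N) (primes_between w z) by apply/hasP; exists p.
by rewrite has_count -/(kk a) k0.
Qed.

End Sieve.

Section Real2.
Variable R : realType.

Lemma predr (j : nat) : (0 < j)%N -> (j.-1)%:R = j%:R - 1 :> R.
Proof. by case: j => // j _; rewrite -natr1 addrK. Qed.

Lemma noint (x y : R) (n : nat) : inT x -> inT y -> y - x <= 1 ->
  x < n%:R -> n%:R < y -> False.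
Proof.
move=> Tx Ty dxy xn ny.
case: Tx => [/andP[x0 x1] | [j [oj [j3 /andP[jx xj]]]]].
  have n1 : (n <= 1)%N.
    rewrite leqNgt; apply/negP => n2.
    have : (2%:R <= n%:R :> R) by rewrite ler_nat.
    lra.
  have n0 : (0 < n)%N by rewrite -(ltr0n R); lra.
  have en : n = 1%N by lia.
  move: xn ny; rewrite en => xn ny.
  case: Ty => [/andP[y0 y1] | [k [ok [k3 /andP[ky yk]]]]]; first lra.
  have : (2%:R <= (k.-1)%:R :> R) by rewrite ler_nat; lia.
  lra.
have ej : (j.-1)%:R = j%:R - 1 :> R.
  by apply: predr; lia.
have h1 : (j.-1 < n)%N by rewrite -(ltr_nat R); lra.
have h2 : (n < j.+1)%N by rewrite -(ltr_nat R) -natr1; lra.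
have en : n = j by lia.
move: xn ny; rewrite en => xn ny.
case: Ty => [/andP[y0 y1] | [k [ok [k3 /andP[ky yk]]]]].
  have : (3%:R <= j%:R :> R) by rewrite ler_nat.
  lra.
have ek : (k.-1)%:R = k%:R - 1 :> R.
  by apply: predr; lia.
have h3 : (j < k)%N by rewrite -(ltr_nat R); lra.
have h4 : (k.-1 < j.+1)%N by rewrite -(ltr_nat R) -natr1; lra.
have ekj : k = j.+1 by lia.
by move: ok; rewrite ekj /= oj.
Qed.

Lemma inU_prod (m1 m2 : R) (n : nat) : inU m1 m2 -> 0 <= (m1 - n%:R) * (m2 - n%:R).
Proof.
move=> [T1 [T2 d]].
move: d; rewrite ler_norml => /andP[d1 d2].
have [h1|h1] := leP (n%:R) m1; have [h2|h2] := leP (n%:R) m2.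
- by apply: mulr_ge0; rewrite subr_ge0.
- case: (ltrgtP (n%:R) m1) => h3; last by rewrite -h3 subrr mul0r.
    by exfalso; apply: (@noint m2 m1 n T2 T1 _ h2 h3); lra.
  lra.
- case: (ltrgtP (n%:R) m2) => h3; last by rewrite -h3 subrr mulr0.
    by exfalso; apply: (@noint m1 m2 n T1 T2 _ h1 h3); lra.
  lra.
- by apply: mulr_le0; rewrite subr_le0 ltW.
Qed.

Lemma inT_pos (x : R) : inT x -> 0 < x.
Proof.
case => [/andP[] // | [k [ok [k3 /andP[kx _]]]]].
have : (2%:R <= (k.-1)%:R :> R) by rewrite ler_nat; lia.
lra.
Qed.
End Real2.

Section Real3.
Variable R : realType.

Lemma bin2R (k : nat) : ('C(k, 2))%:R * 2 = k%:R * (k%:R - 1) :> R.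
Proof.
elim: k => [|k IH]; first by rewrite !mul0r.
rewrite binS bin1 natrD -[(k.+1)%:R]natr1 mulrDl IH; ring.
Qed.

Lemma bin3R (k : nat) : ('C(k, 3))%:R * 6 = k%:R * (k%:R - 1) * (k%:R - 2) :> R.
Proof.
elim: k => [|k IH]; first by rewrite !mul0r.
rewrite binS natrD -[(k.+1)%:R]natr1 mulrDl IH.
have h := bin2R k.
have e : ('C(k, 2))%:R = k%:R * (k%:R - 1) / 2 :> R.
  by rewrite -h mulfK // pnatr_eq0.
rewrite e; field; lra.
Qed.

Lemma poly_le0 (m0 m1 m2 : R) (k : nat) : 0 < m0 <= 1 -> 0 < m1 -> 0 < m2 ->
  0 <= (m1 - k%:R) * (m2 - k%:R) -> (0 < k)%N ->
  1 - (m0 * m1 + m0 * m2 + m1 * m2 - m0 - m1 - m2 + 1) / (m0 * m1 * m2) * k%:R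
    + (2 * (m0 + m1 + m2 - 3)) / (m0 * m1 * m2) * ('C(k, 2))%:R
    - 6 / (m0 * m1 * m2) * ('C(k, 3))%:R <= 0.
Proof.
move=> /andP[m00 m01] m10 m20 hp k0.
have e2 : ('C(k, 2))%:R = k%:R * (k%:R - 1) / 2 :> R.
  by rewrite -bin2R mulfK // pnatr_eq0.
have e3 : ('C(k, 3))%:R = k%:R * (k%:R - 1) * (k%:R - 2) / 6 :> R.
  by rewrite -bin3R mulfK // pnatr_eq0.
have D0 : 0 < m0 * m1 * m2 by rewrite !mulr_gt0.
have -> : 1 - (m0 * m1 + m0 * m2 + m1 * m2 - m0 - m1 - m2 + 1) / (m0 * m1 * m2) * k%:R
    + (2 * (m0 + m1 + m2 - 3)) / (m0 * m1 * m2) * ('C(k, 2))%:R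
    - 6 / (m0 * m1 * m2) * ('C(k, 3))%:R
    = (m0 - k%:R) * ((m1 - k%:R) * (m2 - k%:R)) / (m0 * m1 * m2).
  rewrite e2 e3; field; by rewrite ?(gt_eqF m10) ?(gt_eqF m00) ?(gt_eqF m20).
have k1 : (1 <= k%:R :> R) by rewrite ler1n.

apply: mulr_le0_ge0; last by rewrite invr_ge0 ltW.
apply: mulr_le0_ge0 => //; lra.
Qed.
End Real3.

Arguments inT_pos {R x}.
Arguments inU_prod {R m1 m2}.
Arguments poly_le0 {R m0 m1 m2 k}.
Arguments roughz {R w z a}.
Arguments kk {R}.
Arguments E1 {R}.
Arguments E2 {R}.
Arguments E3 {R}.

Theorem theorem5 (R : realType) (A : seq nat) (w z m0 m1 m2 : R) :
  uniq A -> all (fun a => (0 < a)%N) A ->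
  w <= z -> 0 < m0 <= 1 -> inU m1 m2 ->
  (S A z)%:R >=
    (S A w)%:R
    - (m0 * m1 + m0 * m2 + m1 * m2 - m0 - m1 - m2 + 1) / (m0 * m1 * m2)
        * \sum_(p1 <- primes_between w z) (S (sieve_sub A p1) w)%:R
    + (2 * (m0 + m1 + m2 - 3)) / (m0 * m1 * m2)
        * \sum_(p1 <- primes_between w z) \sum_(p2 <- primes_between w z | (p2 < p1)%N)
            (S (sieve_sub A (p1 * p2)) w)%:R
    - 6 / (m0 * m1 * m2)
        * \sum_(p1 <- primes_between w z) \sum_(p2 <- primes_between w z | (p2 < p1)%N)
            \sum_(p3 <- primes_between w z | (p3 < p2)%N)
              (S (sieve_sub A (p1 * p2 * p3)) w)%:R.

Proof.
move=> _ _ wz m0h hU.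
have [T1 [T2 _]] := hU.
have m1p := inT_pos T1; have m2p := inT_pos T2.
have R1 : \sum_(p1 <- primes_between w z) (S (sieve_sub A p1) w)%:R =
   (\sum_(a <- A) rough w a * kk w z a)%N%:R :> R by rewrite -E1 natr_sum.
have R2 : \sum_(p1 <- primes_between w z) \sum_(p2 <- primes_between w z | (p2 < p1)%N)
     (S (sieve_sub A (p1 * p2)) w)%:R =
   (\sum_(a <- A) rough w a * 'C(kk w z a, 2))%N%:R :> R.
  by rewrite -E2 natr_sum; apply: eq_bigr => p1 _; rewrite natr_sum.
have R3 : \sum_(p1 <- primes_between w z) \sum_(p2 <- primes_between w z | (p2 < p1)%N)
     \sum_(p3 <- primes_between w z | (p3 < p2)%N)
     (S (sieve_sub A (p1 * p2 * p3)) w)%:R =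
   (\sum_(a <- A) rough w a * 'C(kk w z a, 3))%N%:R :> R.
  rewrite -E3 natr_sum; apply: eq_bigr => p1 _; rewrite natr_sum.
  by apply: eq_bigr => p2 _; rewrite natr_sum.
rewrite R1 R2 R3 /S !count_sumE !natr_sum !mulr_sumr -!sumrB -big_split -sumrB /=.
apply: ler_sum => a _.
have zp := ler0n R (rough z a).
case rw: (rough w a); last first.
  by rewrite /= !mul0n !mulr0n !mulr0 subrr addr0 subr0.
rewrite /= !mul1n.
have [k0|k0] := posnP (kk w z a).
  rewrite (roughz rw k0) k0 /=.
  rewrite !mulr0n !mulr0 subr0 addr0 subr0 //.
have := poly_le0 m0h m1p m2p (inU_prod _ hU) k0.
lra.
Qed.
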